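(* Let $0<i_1<i_2<\cdots<i_L$ be integers and let $\mathcal S=\{x_0,x_{i_1},\ldots,x_{i_L}\}$, with associated restricted right-arm rotation distance $d_{RRA}^{\mathcal S}$ (rotations allowed only at the nodes at levels $0,i_1,\ldots,i_L$ on the right arm). Let $T_1,T_2$ be finite rooted binary trees with the same number of nodes such that $(T_1,T_2)$ is a reduced tree pair diagram, and let the word associated to $(T_1,T_2)$ (its unique normal form) be $x_{a_1}^{r_1}\cdots x_{a_k}^{r_k}x_{b_l}^{-s_l}\cdots x_{b_1}^{-s_1}$. If some $x_t^{\pm1}$ with $1\le t\le i_1-1$ appears in this normal form, then $d_{RRA}^{\mathcal S}(T_1,T_2)$ is not defined. Conversely, if no $x_t^{\pm1}$ with $1\le t\le i_1-1$ appears in this normal form, then $d_{RRA}^{\mathcal S}(T_1,T_2)$ is defined.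
   Context: Trees: all trees are finite rooted binary trees in which each internal vertex (node) has a left and a right child; childless vertices are leaves. A tree with $n$ nodes has $n+1$ leaves, numbered $0,1,\ldots,n$ from left to right. The right arm (right side) of a tree consists of the root together with all nodes reachable from the root by a path consisting only of right edges. The level of a node is the number of edges on the path from it to the root. An exposed caret is a node both of whose children are leaves; its leaves $i,i+1$ form a sibling pair. Rotations: if $N$ is a node whose left child $M$ is a node, with $A,B$ the left and right subtrees of $M$ and $C$ the right subtree of $N$, right rotation at $N$ replaces the subtree at $N$ by a tree whose root has left subtree $A$ and whose right child is a node with left subtree $B$ and right subtree $C$; left rotation at $N$ is the inverse operation (possible only when the right child of $N$ is a node). Rotations preserve the number of nodes. Thompson's group $F=\langle x_0,x_1,\ldots\mid x_i^{-1}x_nx_i=x_{n+1}\ (i<n)\rangle$; its elements have normal forms $x_{a_1}^{r_1}\cdots x_{a_k}^{r_k}x_{b_l}^{-s_l}\cdots x_{b_1}^{-s_1}$ ($r_i,s_i>0$, $a_1<\cdots<a_k$, $b_1<\cdots<b_l$), unique if whenever both $x_i$ and $x_i^{-1}$ occur so does $x_{i+1}^{\pm1}$. Tree pair diagrams: a pair $(T_1,T_2)$ of trees with the same number $n$ of nodes. The leaf exponent of leaf $k$ in a tree is the length of the longest path of left edges going upward from leaf $k$ none of whose vertices lies on the right arm. The word associated to $(T_1,T_2)$ is $x_0^{f_0}x_1^{f_1}\cdots x_n^{f_n}x_n^{-e_n}\cdots x_1^{-e_1}x_0^{-e_0}$, where $e_i$ (resp. $f_i$) is the leaf exponent of leaf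 $i$ in $T_1$ (resp. $T_2$); $(T_1,T_2)$ represents the element of $F$ given by this word. The diagram is reduced if there is no $i$ such that leaves $i,i+1$ form a sibling pair in both $T_1$ and $T_2$; for a reduced diagram the associated word is the unique normal form. Restricted right-arm rotation distance: for $\mathcal S=\{x_0,x_{i_1},\ldots,x_{i_L}\}$ and trees $T_1,T_2$ with the same number of nodes, $d_{RRA}^{\mathcal S}(T_1,T_2)$ is the minimal number of (left or right) rotations, each performed at a node on the right arm at one of the levels $0,i_1,\ldots,i_L$, needed to transform $T_1$ into $T_2$; it is said to be defined when some such sequence of rotations exists. *)

(* Defs.v *)
From Stdlib Require Import Relations.
From mathcomp Require Import all_boot.
Set Implicit Arguments. Unset Strict Implicit. Unset Printing Implicit Defensive.

Inductive tree : Type := Leaf | Node of tree & tree.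

Fixpoint nodes (t : tree) : nat :=
  match t with Leaf => 0 | Node l r => (nodes l + nodes r).+1 end.

Definition nleaves (t : tree) : nat := (nodes t).+1.

Definition rotR (t : tree) : option tree :=
  match t with Node (Node a b) c => Some (Node a (Node b c)) | _ => None end.
Definition rotL (t : tree) : option tree :=
  match t with Node a (Node b c) => Some (Node (Node a b) c) | _ => None end.

(* Apply a local operation at the node of the right arm at level k
   (the node reached from the root by k right edges); None if that vertex
   does not exist or is a leaf, or if the operation is impossible there. *)
Fixpoint at_arm (f : tree -> option tree) (k : nat) (t : tree) : option tree :=
  match k, t with
  | 0, Node _ _ => f t
  | k'.+1, Node l r =>
      match at_arm f k' r with Some r' => Some (Node l r') | None => None end
  | _, Leaf => None
  end.

Definition rra_step (levels : seq nat) (t t' : tree) : Prop :=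
  exists2 k, k \in levels &
    at_arm rotR k t = Some t' \/ at_arm rotL k t = Some t'.

(* d_RRA^S(T1,T2) is defined: some finite sequence of allowed rotations
   transforms T1 into T2; S = {x_0, x_{i_1}, ..., x_{i_L}} gives levels 0,i_1,..,i_L *)
Definition dRRA_defined (idx : seq nat) (T1 T2 : tree) : Prop :=
  clos_refl_trans tree (rra_step (0 :: idx)) T1 T2.

(* Leaf exponents.  For a subtree none of whose vertices lies on the right arm:
   the leftmost leaf of the left subtree gains one more left edge upward. *)
Definition incr_head (s : seq nat) : seq nat :=
  match s with [::] => [::] | x :: s' => x.+1 :: s' end.

Fixpoint exps_off (t : tree) : seq nat :=
  match t with Leaf => [:: 0] | Node l r => incr_head (exps_off l) ++ exps_off r end.

(* Whole tree: the root and right-arm nodes are on the right arm, so the edge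
   from a left subtree of an arm node into the arm is not counted. *)
Fixpoint leaf_exps (t : tree) : seq nat :=
  match t with Leaf => [:: 0] | Node l r => exps_off l ++ leaf_exps r end.

(* leaf exponent of leaf k (0 for out-of-range k) *)
Definition leaf_exp (t : tree) (k : nat) : nat := nth 0 (leaf_exps t) k.

(* indices i such that leaves i, i+1 form a sibling pair (exposed caret) *)
Fixpoint sibpairs (t : tree) : seq nat :=
  match t with
  | Leaf => [::]
  | Node Leaf Leaf => [:: 0]
  | Node l r => sibpairs l ++ map (addn (nleaves l)) (sibpairs r)
  end.

Definition reduced (T1 T2 : tree) : Prop :=
  nodes T1 = nodes T2 /\ ~ (exists i, i \in sibpairs T1 /\ i \in sibpairs T2).

(* The word associated to (T1,T2) is
     x_0^{f_0} ... x_n^{f_n} x_n^{-e_n} ... x_0^{-e_0},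
   e_i = leaf_exp T1 i, f_i = leaf_exp T2 i. *)
Definition appears_in_word (T1 T2 : tree) (t : nat) : Prop :=
  leaf_exp T2 t <> 0 \/ leaf_exp T1 t <> 0.

(* Main.v *)
Require Import Defs.
From mathcomp Require Import all_boot.
From mathcomp Require Import all_boot zify.
From Stdlib Require Import Lia Relations.

Lemma nleavesN x y : nleaves (Node x y) = nleaves x + nleaves y.
Proof. rewrite /nleaves /=; lia. Qed.

Lemma nleaves_gt0 x : 0 < nleaves x.
Proof. by []. Qed.

Fixpoint occ (S : tree) (a : nat) (t : tree) : Prop :=
  (a = 0 /\ t = S) \/
  match t with Leaf => False
  | Node l r => occ S a l \/ exists2 a', a = nleaves l + a' & occ S a' r end.

Fixpoint narm (S : tree) (a : nat) (T : tree) : Prop :=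
  match T with Leaf => False
  | Node l r => occ S a l \/ exists2 a', a = nleaves l + a' & narm S a' r end.

Definition top_pres (f : tree -> option tree) :=
  forall S a t t', 0 < a -> f t = Some t' -> narm S a t -> narm S a t'.

Lemma top_rotR : top_pres rotR.
Proof.
move=> S a [|[|x y] c] t' Ha //= [<-] /=.
case=> [[[a0 _]|[H|[a' Ea H]]]|[a' Ea H]].
- by rewrite a0 in Ha.
- by left.
- by right; exists a' => //; left.
- right; exists (nleaves y + a'); first by rewrite Ea nleavesN addnA.
  by right; exists a'.
Qed.

Lemma top_rotL : top_pres rotL.
Proof.
move=> S a [|x [|y c]] t' Ha //= [<-] /=.
case=> [H|[a' Ea [H|[a'' Ea' H]]]].
- by left; right; left.
- by left; right; right; exists a'.
- by right; exists a''; first by rewrite Ea Ea' nleavesN addnA.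
Qed.

Lemma arm_pres f : top_pres f -> forall k S a T T',
  (if k is 0 then 0 < a else a < k) -> at_arm f k T = Some T' ->
  narm S a T -> narm S a T'.
Proof.
move=> Hf; elim=> [|k IH] S a [|l r] T' Hk //=.
- by move=> Hs; apply: Hf Hs.
- case E: (at_arm f k r) => [r'|] // [<-] /=.
  case=> [H|[a' Ea H]]; first by left.
  right; exists a' => //.
  have Hk' : ((if k is 0 then 0 < a' else a' < k) : bool).
    by have := nleaves_gt0 l; case: k {IH E} Hk => [|k] Hk; lia.
  exact: (IH S a' r r' Hk' E H).
Qed.

Lemma at_arm_RL k t t' : at_arm rotR k t = Some t' -> at_arm rotL k t = Some t' -> False.
Proof. Abort.

Lemma at_arm_inv1 k t t' : at_arm rotR k t = Some t' -> at_arm rotL k t' = Some t.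
Proof.
elim: k t t' => [|k IH] [|l r] t' //=.
- by case: l => [|a b] //= [<-].
- case E: (at_arm rotR k r) => [r'|] // [<-] /=.
  by rewrite (IH _ _ E).
Qed.

Lemma at_arm_inv2 k t t' : at_arm rotL k t = Some t' -> at_arm rotR k t' = Some t.
Proof.
elim: k t t' => [|k IH] [|l r] t' //=.
- by case: r => [|a b] //= [<-].
- case E: (at_arm rotL k r) => [r'|] // [<-] /=.
  by rewrite (IH _ _ E).
Qed.

Lemma step_sym L t t' : rra_step L t t' -> rra_step L t' t.
Proof.
case=> k Hk [H|H]; exists k => //.
- by right; apply: at_arm_inv1.
- by left; apply: at_arm_inv2.
Qed.

Lemma crt_sym L t t' : clos_refl_trans tree (rra_step L) t t' ->
  clos_refl_trans tree (rra_step L) t' t.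
Proof.
elim=> [x y H|x|x y z _ H1 _ H2].
- by apply: rt_step; apply: step_sym.
- exact: rt_refl.
- exact: rt_trans H2 H1.
Qed.

Lemma lvl_ok i1 rest k a : 0 < i1 -> sorted ltn (i1 :: rest) ->
  k \in 0 :: i1 :: rest -> 0 < a -> a < i1 ->
  (if k is 0 then 0 < a else a < k).
Proof.
move=> Hi Hs; rewrite !inE => /orP[/eqP->//|/orP[/eqP->|Hk]] Ha Hai.
- by case: i1 Hi Hai Hs.
- have := order_path_min ltn_trans Hs => /allP/(_ k Hk) Hik.
  case: k Hk Hik => [|k] _ Hik; lia.
Qed.

Lemma crt_pres i1 rest S a T T' : 0 < i1 -> sorted ltn (i1 :: rest) ->
  0 < a -> a < i1 ->
  clos_refl_trans tree (rra_step (0 :: i1 :: rest)) T T' ->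
  narm S a T -> narm S a T'.
Proof.
move=> Hi Hs Ha Hai; elim=> [x y [k Hk [H|H]]|x|x y z _ H1 _ H2] //.
- exact: (@arm_pres _ top_rotR k S a x y (lvl_ok _ _ _ _ Hi Hs Hk Ha Hai) H).
- exact: (@arm_pres _ top_rotL k S a x y (lvl_ok _ _ _ _ Hi Hs Hk Ha Hai) H).
- by move=> /H1 /H2.
Qed.

Lemma size_incr_head s : size (incr_head s) = size s.
Proof. by case: s. Qed.

Lemma nth_incr_head s a : 0 < a -> nth 0 (incr_head s) a = nth 0 s a.
Proof. by case: s => [|x s] //; case: a. Qed.

Lemma size_exps_off t : size (exps_off t) = nleaves t.
Proof.
elim: t => [//|l IHl r IHr] /=.
by rewrite size_cat size_incr_head IHl IHr nleavesN.
Qed.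

Lemma nth_nz_lt s a : nth 0 s a <> 0 -> a < size s.
Proof. by move=> H; rewrite ltnNge; apply/negP => /(nth_default 0). Qed.

Lemma occ_exp x y a A : occ (Node x y) a A -> nth 0 (exps_off A) a <> 0.
Proof.
elim: A a => [|l IHl r IHr] a /=.
- by case=> [[_ //]|].
- have Hl := size_exps_off l.
  case: a => [|a] Ho.
    rewrite nth_cat size_incr_head Hl /=.
    by case: (exps_off l) Hl.
  case: Ho => [[//]|[H|[a' Ea H]]].
  + have := IHl _ H => H'. have := nth_nz_lt _ _ H'.
    move=> Hlt; rewrite nth_cat size_incr_head Hlt nth_incr_head //.
  + rewrite nth_cat size_incr_head Hl Ea ltnNge leq_addr /= addKn.
    exact: IHr.
Qed.

Lemma narm_exp x y a T : narm (Node x y) a T -> nth 0 (leaf_exps T) a <> 0.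
Proof.
elim: T a => [|l IHl r IHr] a //=.
case=> [H|[a' Ea H]].
- have H' := occ_exp _ _ _ _ H; have Hlt := nth_nz_lt _ _ H'.
  by rewrite nth_cat Hlt.
- rewrite nth_cat size_exps_off Ea ltnNge leq_addr /= addKn.
  exact: IHr.
Qed.

Lemma exp_occ a A : nth 0 (exps_off A) a <> 0 -> exists x y, occ (Node x y) a A.
Proof.
elim: A a => [|l IHl r IHr] a /=.
- by case: a => [|[|a]].
- case: a => [|a] H.
    by exists l, r; left.
  move: H; rewrite nth_cat size_incr_head size_exps_off.
  case: ifP => Hlt.
    rewrite nth_incr_head // => /IHl [x [y Ho]].
    by exists x, y; right; left.
  move=> /IHr [x [y Ho]]; exists x, y; right; right.
  exists (a.+1 - nleaves l) => //.
  move: Hlt => /negbT; rewrite -leqNgt; lia.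
Qed.

Lemma exp_narm a T : nth 0 (leaf_exps T) a <> 0 -> exists x y, narm (Node x y) a T.
Proof.
elim: T a => [|l IHl r IHr] a /=.
- by case: a => [|[|a]].
- rewrite nth_cat size_exps_off; case: ifP => Hlt.
    by move=> /exp_occ [x [y Ho]]; exists x, y; left.
  move=> /IHr [x [y Ho]]; exists x, y; right.
  exists (a - nleaves l) => //.
  move: Hlt => /negbT; rewrite -leqNgt; lia.
Qed.

Lemma sibN l r : sibpairs (Node l r) =
  if (l, r) is (Leaf, Leaf) then [:: 0]
  else sibpairs l ++ map (addn (nleaves l)) (sibpairs r).
Proof. by case: l => [|? ?]; case: r. Qed.

Lemma sib_l l r i : i \in sibpairs l -> i \in sibpairs (Node l r).
Proof.
rewrite sibN; case: l => [|a b] //= H.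
by rewrite mem_cat H.
Qed.

Lemma sib_r l r i : i \in sibpairs r -> nleaves l + i \in sibpairs (Node l r).
Proof.
rewrite sibN => H.
have -> : (if (l, r) is (Leaf, Leaf) then [:: 0]
  else sibpairs l ++ map (addn (nleaves l)) (sibpairs r)) =
  sibpairs l ++ map (addn (nleaves l)) (sibpairs r).
  by case: l H => [|? ?]; case: r.
by rewrite mem_cat map_f ?orbT.
Qed.

Lemma sib_exists t : t <> Leaf -> exists i, i \in sibpairs t.
Proof.
elim: t => [//|l IHl r IHr] _.
case: l IHl => [|a b] IHl.
- case: r IHr => [|c d] IHr; first by exists 0.
  have [i Hi] := IHr (fun e : Node c d = Leaf => match e in _ = z return (if z is Leaf then False else True) with erefl => I end); exists (nleaves Leaf + i); exact: sib_r.
- have [i Hi] := IHl (fun e : Node a b = Leaf => match e in _ = z return (if z is Leaf then False else True) with erefl => I end); exists i; exact: sib_l.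
Qed.

Lemma occ_sib S a t i : occ S a t -> i \in sibpairs S -> a + i \in sibpairs t.
Proof.
elim: t a => [|l IHl r IHr] a /=.
- by case=> [[-> <-]|].
- case=> [[-> <-]//|[H|[a' Ea H]]] Hi.
  + exact/sib_l/IHl.
  + by rewrite Ea -addnA; apply/sib_r/IHr.
Qed.

Lemma narm_sib S a t i : narm S a t -> i \in sibpairs S -> a + i \in sibpairs t.
Proof.
elim: t a => [|l IHl r IHr] a //=.
case=> [H|[a' Ea H]] Hi.
- by apply: sib_l; apply: (occ_sib _ _ _ _ H Hi).
- by rewrite Ea -addnA; apply/sib_r/IHr.
Qed.

Fixpoint comb k u := if k is k'.+1 then Node Leaf (comb k' u) else u.
Fixpoint nonarm T := if T is Node l r then nodes l + nonarm r else 0.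
Fixpoint vine n := if n is n'.+1 then Node Leaf (vine n') else Leaf.

Lemma at_arm_comb f k p q u' : f (Node p q) = Some u' ->
  at_arm f k (comb k (Node p q)) = Some (comb k u').
Proof. by move=> H; elim: k => [|k IH] //=; rewrite IH. Qed.

Lemma narm_comb S a k u : narm S a u -> narm S (k + a) (comb k u).
Proof.
move=> H; elim: k => [|k IH] //=.
by right; exists (k + a).
Qed.

Lemma nodes_comb k u : nodes (comb k u) = k + nodes u.
Proof. by elim: k => //= k ->. Qed.

Lemma nonarm_comb k u : nonarm (comb k u) = nonarm u.
Proof. by elim: k. Qed.

Lemma first_node T : 0 < nonarm T -> exists k x y c, T = comb k (Node (Node x y) c).
Proof.
elim: T => [//|l IHl r IHr] /=.
case: l {IHl} => [|x y] H.
- have [k [x [y [c ->]]]] := IHr H. by exists k.+1, x, y, c.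
- by exists 0, x, y, r.
Qed.

Lemma nonarm0 T : nonarm T = 0 -> T = vine (nodes T).
Proof.
elim: T => [//|l _ r IHr] /= H.
have Hl : nodes l = 0 by lia.
have Hr : nonarm r = 0 by lia.
case: l Hl {H} => [|? ?] //= _.
by rewrite ?add0n -(IHr Hr).
Qed.

Section Conn.
Variables (i1 : nat) (rest : seq nat).
Hypothesis Hi : 0 < i1.
Hypothesis Hs : sorted ltn (i1 :: rest).
Local Notation R := (clos_refl_trans tree (rra_step (0 :: i1 :: rest))).

Lemma G d t t' : at_arm rotR (i1 + d) t = Some t' -> R t t'.
Proof.
elim: d t t' => [|d IH] t t'.
  rewrite addn0 => H; apply: rt_step; exists i1; first by rewrite !inE eqxx orbT.
  by left.
have [j Ej] : exists j, i1 = j.+1 by exists i1.-1; rewrite prednK.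
rewrite addnS {1}Ej addSn /=.
case: t => [//|a [//|b c]] /=.
case E: (at_arm rotR (j + d) c) => [c'|] // [<-].
have H1 : R (Node a (Node b c)) (Node (Node a b) c).
  apply: rt_step; exists 0; first by rewrite inE eqxx.
  by right.
have H2 : R (Node (Node a b) c) (Node (Node a b) c').
  apply: IH; rewrite Ej addSn /= E //.
have H3 : R (Node (Node a b) c') (Node a (Node b c')).
  apply: rt_step; exists 0; first by rewrite inE eqxx.
  by left.
exact: (rt_trans _ _ _ _ _ H1 (rt_trans _ _ _ _ _ H2 H3)).
Qed.

Definition Zp T := forall S a, 0 < a -> a < i1 -> narm S a T -> S = Leaf.

Lemma conn m T : nonarm T <= m -> Zp T -> R T (vine (nodes T)).
Proof.
elim: m T => [|m IH] T Hm HZ.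
  have ET : T = vine (nodes T) by apply: nonarm0; lia.
  by rewrite {1}ET; apply: rt_refl.
case: (posnP (nonarm T)) => Hn.
  by rewrite {1}(nonarm0 _ Hn); apply: rt_refl.
have [k [x [y [c ET]]]] := first_node T Hn.
set T' := comb k (Node x (Node y c)).
have HR : at_arm rotR k T = Some T' by rewrite ET; apply: at_arm_comb.
have HL : at_arm rotL k T' = Some T by apply: at_arm_inv1.
have Hk : k = 0 \/ i1 <= k.
  case: (posnP k) => Hk0; first by left.
  case: (leqP i1 k) => Hk1; first by right.
  have : narm (Node x y) (k + 0) T.
    by rewrite ET; apply: narm_comb; left; left.
  by rewrite addn0 => /(HZ _ _ Hk0 Hk1).
have HTT' : R T T'.
  case: Hk => [Hk|Hk].
    by apply: rt_step; exists k; [rewrite Hk inE eqxx|left].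
  apply: (G (k - i1)); by rewrite subnKC.
have HZ' : Zp T'.
  move=> S a Ha Hai HN; apply: (HZ S a Ha Hai).
  apply: (arm_pres _ top_rotL k S a T' T _ HL HN).
  case: Hk => [->//|Hk].
  have aux : forall k0, i1 <= k0 -> ((if k0 is 0 then 0 < a else a < k0) : bool).
    by case=> [|k0] H0; lia.
  exact: aux.
have Hnodes : nodes T' = nodes T.
  rewrite ET /T' !nodes_comb /=; lia.
have Hnon : nonarm T' < nonarm T.
  rewrite ET /T' !nonarm_comb /=; lia.
apply: (rt_trans _ _ _ _ _ HTT'); rewrite -Hnodes; apply: IH => //; lia.
Qed.

End Conn.

Theorem lemma3p4 (i1 : nat) (rest : seq nat) (T1 T2 : tree) :
  0 < i1 -> sorted ltn (i1 :: rest) ->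
  nodes T1 = nodes T2 -> reduced T1 T2 ->
  ((exists t, 1 <= t <= i1 - 1 /\ appears_in_word T1 T2 t) ->
     ~ dRRA_defined (i1 :: rest) T1 T2) /\
  (~ (exists t, 1 <= t <= i1 - 1 /\ appears_in_word T1 T2 t) ->
     dRRA_defined (i1 :: rest) T1 T2).
Proof.
move=> Hi Hs Hn [_ Hred]; split.
- move=> [t [Ht Hap]] HR.
  have Ht1 : 0 < t by lia.
  have Ht2 : t < i1 by lia.
  have [x [y [H1 H2]]] : exists x y, narm (Node x y) t T1 /\ narm (Node x y) t T2.
    case: Hap => /exp_narm [x [y H]]; exists x, y.
    + have H' := crt_pres i1 rest _ _ _ _ Hi Hs Ht1 Ht2 (crt_sym _ _ _ HR) H.
      by split.
    + have H' := crt_pres i1 rest _ _ _ _ Hi Hs Ht1 Ht2 HR H.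
      by split.
  have [i Hi'] := sib_exists (Node x y) (fun e : Node x y = Leaf => match e in _ = z return (if z is Leaf then False else True) with erefl => I end).
  apply: Hred; exists (t + i); split.
  + exact: narm_sib H1 Hi'.
  + exact: narm_sib H2 Hi'.
- move=> Hno.
  have HZ : forall T, (forall t, 0 < t -> t < i1 -> leaf_exp T t = 0) -> Zp i1 T.
    move=> T HT S a Ha Hai; case: S => [//|x y] HN.
    by have := narm_exp _ _ _ _ HN; rewrite -/(leaf_exp T a) HT.
  have Z1 : Zp i1 T1.
    apply: HZ => t Ht1 Ht2; case: (leaf_exp T1 t =P 0) => // Hne.
    by exfalso; apply: Hno; exists t; split; [lia|right].
  have Z2 : Zp i1 T2.
    apply: HZ => t Ht1 Ht2; case: (leaf_exp T2 t =P 0) => // Hne.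
    by exfalso; apply: Hno; exists t; split; [lia|left].
  have C1 := conn i1 rest Hi Hs (nonarm T1) T1 (leqnn _) Z1.
  have C2 := conn i1 rest Hi Hs (nonarm T2) T2 (leqnn _) Z2.
  rewrite Hn in C1.
  exact: (rt_trans _ _ _ _ _ C1 (crt_sym _ _ _ C2)).
Qed.
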